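(* Let $r\ge 1$ and $n\ge 3r+4$ be integers. Then $\rho(K_{3,n-3})>\rho(H_{n,r})$.
   Context: $\rho$ denotes the spectral radius (largest adjacency eigenvalue). $K_1\vee rK_3$ is the join of a single vertex with $r$ disjoint triangles; let $u$ be its vertex of degree $3r$ (any vertex if $r=1$). In $K_{3,n-3r-3}$ (complete bipartite with parts of sizes $3$ and $n-3r-3$), let $vw$ be an edge where $v$ has degree $n-3r-3$ and $w$ has degree $3$. $H_{n,r}$ is the graph obtained from the disjoint union of $K_1\vee rK_3$ and $K_{3,n-3r-3}$ by identifying $u$ with $v$. *)

(* Defs.v *)
From HB Require Import structures.
From mathcomp Require Import all_boot all_order all_algebra.
From mathcomp Require Import classical_sets reals.
Set Implicit Arguments. Unset Strict Implicit. Unset Printing Implicit Defensive.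
Import Order.TTheory GRing.Theory Num.Theory.

Definition adj_mx (R : realType) (n : nat) (e : nat -> nat -> bool) : 'M[R]_n :=
  \matrix_(i < n, j < n) ((e i j : nat)%:R)%R.

(* Spectral radius = largest eigenvalue of the adjacency matrix
   (the eigenvalue set of a real symmetric matrix is finite and nonempty,
   so its supremum is its maximum). *)
Definition spectral_radius (R : realType) (n : nat) (A : 'M[R]_n) : R :=
  sup [set x : R | eigenvalue A x].

Definition K3_edge (i j : nat) : bool :=
  ((i < 3) && (3 <= j)) || ((j < 3) && (3 <= i)).

(* H_{n,r} on vertices 0..n-1:
   - 0 is the identified vertex u = v;
   - triangles: {3k+1, 3k+2, 3k+3} for k < r (these 3r vertices together with 0
     form K_1 \/ rK_3, 0 being the vertex of degree 3r);
   - K_{3,n-3r-3}: the part of size 3 is {0, 3r+1, 3r+2} (v = 0 has degree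
     n-3r-3), the other part is {3r+3, ..., n-1}. *)
Definition H_edge (r : nat) (i j : nat) : bool :=
  let tri k := (1 <= k) && (k <= 3 * r) in
  let part3 k := [|| k == 0, k == 3 * r + 1 | k == 3 * r + 2] in
  let partm k := 3 * r + 3 <= k in
  (i != j) &&
  [|| (i == 0) && tri j, (j == 0) && tri i,
      [&& tri i, tri j & (i.-1 %/ 3 == j.-1 %/ 3)],
      part3 i && partm j | part3 j && partm i].

(* Main.v *)
Require Import Defs.
From HB Require Import structures.
From mathcomp Require Import all_boot all_order all_algebra.
From mathcomp Require Import boolp classical_sets reals.
From mathcomp Require Import zify ring lra.
Import Order.TTheory GRing.Theory Num.Theory.
Local Open Scope ring_scope.
Lemma cw_bound (R : realType) n (A : 'M[R]_n) (y : 'I_n -> R) (c mu : R) :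
  (forall i j, 0 <= A i j) -> (forall i, 0 < y i) ->
  (forall j, \sum_i y i * A i j <= c * y j) -> eigenvalue A mu -> `|mu| <= c.
Proof.
move=> A0 y0 Hc /eigenvalueP [v Hv vn0].
have [i0 Hi0] : exists i0, v 0 i0 != 0.
  apply/existsP; apply: contraNT vn0 => /existsPn H.
  apply/eqP/matrixP => i k; rewrite mxE (ord1 i); exact/eqP/negPn/H.
pose F i := `|v 0 i| / y i.
case: (@arg_maxP _ R _ i0 xpredT F isT) => j _ Hj.
have yj := y0 j.
have Fi0 : 0 < F i0 by rewrite /F divr_gt0 ?normr_gt0.
have Ft : 0 < F j by apply: lt_le_trans Fi0 (Hj _ isT).
have vj : `|v 0 j| = F j * y j by rewrite /F divfK ?gt_eqF.
have vjp : 0 < `|v 0 j| by rewrite vj mulr_gt0.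
have col : \sum_i v 0 i * A i j = mu * v 0 j.
  by move: Hv => /matrixP/(_ 0 j); rewrite !mxE.
have key : `|mu| * `|v 0 j| <= c * `|v 0 j|.
  rewrite -normrM -col.
  apply: le_trans (ler_norm_sum _ _ _) _.
  apply: (@le_trans _ _ (\sum_i F j * (y i * A i j))).
    apply: ler_sum => i _; rewrite normrM (ger0_norm (A0 i j)) mulrA.
    apply: ler_wpM2r => //.
    move: (Hj i isT) => /= H; rewrite -ler_pdivrMr ?y0 //.
    idtac.
  rewrite -big_distrr /= vj mulrCA; apply: ler_wpM2l; [exact: ltW | exact: Hc].
by rewrite -(ler_pM2r vjp).
Qed.

Definition ind {R : realType} (lo hi : nat) (x : R) (i : nat) : R :=
  if (lo <= i < hi)%N then x else 0.

Lemma sum_range (R : realType) n lo hi (x : R) :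
  \sum_(i < n) ind lo hi x i = (minn hi n - lo)%:R * x.
Proof.
elim: n => [|n IH]; first by rewrite big_ord0 (_ : (minn hi 0 - lo = 0)%N) ?mul0r //; lia.
rewrite big_ord_recr /= IH /ind; case: ifP => H.
  by rewrite (_ : (minn hi n.+1 - lo = (minn hi n - lo) + 1)%N) ?natrD ?mulrDl ?mul1r //; lia.
by rewrite addr0 (_ : (minn hi n.+1 - lo = (minn hi n - lo))%N) //; lia.
Qed.

Definition yv {R : realType} (r : nat) (a b c d : R) (i : nat) : R :=
  if (i == 0)%N then a else if (i <= 3 * r)%N then b else if (i <= 3 * r + 2)%N then c else d.

Ltac pw := move=> i _; have := ltn_ord i; rewrite /adj_mx !mxE /ind /yv; case: (boolP (H_edge _ _ _)); rewrite /H_edge => Hij in_;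
  rewrite ?mulr1 ?mulr0; repeat case: ifP => ?; rewrite ?addr0 ?add0r; try lra; exfalso; lia.

Lemma H_colsum (R : realType) n r (a b c d : R) (j : 'I_n) :
  (1 <= r)%N -> (3 * r + 4 <= n)%N -> 0 <= a -> 0 <= b -> 0 <= c -> 0 <= d ->
  \sum_(i < n) yv r a b c d i * adj_mx R n (H_edge r) i j <=
  (if (j == 0 :> nat)%N then (3 * r)%:R * b + (n - 3 * r - 3)%:R * d
   else if (j <= 3 * r)%N then a + 2 * b
   else if (j <= 3 * r + 2)%N then (n - 3 * r - 3)%:R * d
   else a + 2 * c).
Proof.
move=> r1 rn a0 b0 c0 d0.
have jn := ltn_ord j.
case: ifP => j0.
  apply: (@le_trans _ _ (\sum_(i < n) (ind 1 (3 * r + 1) b i + ind (3 * r + 3) n d i))).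
    apply: ler_sum; pw.

  rewrite big_split /= !sum_range.
  have -> : (minn (3 * r + 1) n - 1 = 3 * r)%N by lia.
  have -> : (minn n n - (3 * r + 3) = n - 3 * r - 3)%N by lia.
  by [].
case: ifP => j1.
  set q := (j.-1 %/ 3)%N.
  apply: (@le_trans _ _ (\sum_(i < n) (ind 0 1 a i + ind (3 * q + 1) j b i + ind (j + 1) (3 * q + 4) b i))).
    apply: ler_sum; rewrite /q; pw.
  rewrite !big_split /= !sum_range.
  have -> : (minn 1 n - 0 = 1)%N by lia.
  have E2 : ((minn j n - (3 * q + 1)) + (minn (3 * q + 4) n - (j + 1)) = 2)%N by rewrite /q; lia.
  by rewrite mul1r -addrA -mulrDl -natrD E2.
case: ifP => j2.
  apply: (@le_trans _ _ (\sum_(i < n) ind (3 * r + 3) n d i)).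
    apply: ler_sum; pw.
  rewrite !sum_range.
  have -> : (minn n n - (3 * r + 3) = n - 3 * r - 3)%N by lia.
  by [].
apply: (@le_trans _ _ (\sum_(i < n) (ind 0 1 a i + ind (3 * r + 1) (3 * r + 3) c i))).
  apply: ler_sum; pw.
rewrite !big_split /= !sum_range.
have -> : (minn 1 n - 0 = 1)%N by lia.
have -> : (minn (3 * r + 3) n - (3 * r + 1) = 2)%N by lia.
by rewrite mul1r.
Qed.
Lemma eqle (R : realType) (x y : R) : x = y -> x <= y.
Proof. by move->. Qed.

Lemma adj_bound (R : realType) n e mu :
  eigenvalue (adj_mx R n e) mu -> mu <= n%:R.
Proof.
move=> Hmu; apply: le_trans (ler_norm mu) _.
apply: (@cw_bound R n (adj_mx R n e) (fun _ => 1)) Hmu.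
- by move=> i j; rewrite mxE ler0n.
- by move=> i; exact: ltr01.
move=> j; rewrite mulr1.
apply: (@le_trans _ _ (\sum_(i < n) (1 : R))).
  by apply: ler_sum => i _; rewrite mul1r mxE; case: (e i j); rewrite ?lexx ?ler01.
by rewrite sumr_const card_ord.
Qed.

Lemma K_eig (R : realType) n : (3 < n)%N ->
  eigenvalue (adj_mx R n K3_edge) (Num.sqrt (3 * (n - 3))%:R).
Proof.
move=> n3; set la := Num.sqrt _.
have la2 : la ^+ 2 = (3 * (n - 3))%:R by rewrite sqr_sqrtr ?ler0n.
apply/eigenvalueP.
exists (\row_(i < n) (if (i < 3)%N then (n - 3)%:R else la)).
  apply/matrixP => k j; rewrite !mxE.
  case: (ltnP j 3) => Hj.
    rewrite (@eq_bigr _ _ _ _ _ _ _ (fun i : 'I_n => ind 3 n la i)); last first.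
      move=> i _; have := ltn_ord i; rewrite !mxE /ind; case: (boolP (K3_edge _ _));
      rewrite /K3_edge => Hk in_; rewrite ?mulr1 ?mulr0; repeat case: ifP => ?; try lra; exfalso; lia.
    rewrite sum_range mulrC; congr (_ * _); congr (_%:R); lia.
  rewrite (@eq_bigr _ _ _ _ _ _ _ (fun i : 'I_n => ind 0 3 (n - 3)%:R i)); last first.
    move=> i _; have := ltn_ord i; rewrite !mxE /ind; case: (boolP (K3_edge _ _));
    rewrite /K3_edge => Hk in_; rewrite ?mulr1 ?mulr0; repeat case: ifP => ?; try lra; exfalso; lia.
  by rewrite sum_range -expr2 la2 -natrM; congr (_%:R); lia.
apply: contraTneq isT => /matrixP/(_ 0 (Ordinal (ltn_trans (isT : (0 < 3)%N) n3))).
rewrite !mxE /= => /eqP; rewrite pnatr_eq0 => /eqP; lia.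
Qed.

Theorem lemma4p3 (R : realType) (n r : nat) :
  (1 <= r)%N -> (3 * r + 4 <= n)%N ->
  spectral_radius (adj_mx R n (H_edge r)) < spectral_radius (adj_mx R n K3_edge).
Proof.
move=> r1 rn.
set m := (n - 3 * r - 3)%N.
pose M : R := m%:R. pose Rr : R := r%:R.
have M1 : 1 <= M by rewrite /M ler1n; lia.
have R1 : 1 <= Rr by rewrite /Rr ler1n.
pose th : R := Num.sqrt (3 * (n - 3) - 1)%:R.
have eN : ((3 * (n - 3) - 1) + 1 = 3 * m + 9 * r)%N by rewrite /m; lia.
have eR : ((3 * (n - 3) - 1)%:R : R) = 3 * M + 9 * Rr - 1.
  have := congr1 (fun k => k%:R : R) eN; rewrite /= !natrD -/M -/Rr; lra.
have th2 : th ^+ 2 = 3 * M + 9 * Rr - 1 by rewrite sqr_sqrtr ?ler0n // eR.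
have th0 : 0 <= th by apply: sqrtr_ge0.
have thb : 16 / 5 <= th.
  rewrite -[th]ger0_norm // -[16 / 5]ger0_norm; last by lra.
  rewrite -ler_sqr ?nnegrE ?normr_ge0 //.
  rewrite !real_normK ?num_real // th2; lra.
pose a := (th - 2) * (th ^+ 2 - 2 * M).
pose b := th ^+ 2 - 2 * M.
pose c := M * (th - 2).
pose d := th * (th - 2).
have bp : 0 < b by rewrite /b th2; lra.
have t2 : 0 < th - 2 by lra.
have ap : 0 < a by rewrite /a mulr_gt0.
have cp : 0 < c by rewrite /c mulr_gt0 //; lra.
have dp : 0 < d by rewrite /d mulr_gt0 //; lra.
have Hup : forall mu, eigenvalue (adj_mx R n (H_edge r)) mu -> mu <= th.
  move=> mu Hmu; apply: le_trans (ler_norm mu) _.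
  apply: (@cw_bound R n _ (fun i : 'I_n => yv r a b c d i)) Hmu.
  - by move=> i j; rewrite mxE ler0n.
  - by move=> i; rewrite /yv; repeat case: ifP => _.
  move=> j; apply: le_trans (@H_colsum R n r a b c d j r1 rn (ltW ap) (ltW bp) (ltW cp) (ltW dp)) _.
  rewrite -/m -/M /yv; case: ifP => _.
    have h1 : 0 <= th * (6 * Rr - 1) - 18 * Rr + 2.
      have : 0 <= (th - 16 / 5) * (6 * Rr - 1) by apply: mulr_ge0; lra.
      lra.
    have h2 : 0 <= th * (th * (6 * Rr - 1) - 18 * Rr + 2) by apply: mulr_ge0.
    have h3 : 0 <= 6 * Rr * M by apply: mulr_ge0; lra.
    have key : th * a - ((3 * r)%:R * b + M * d) =
      th * (th * (6 * Rr - 1) - 18 * Rr + 2) + 6 * Rr * M +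
      (th ^+ 2 - (3 * M + 9 * Rr - 1)) * (th ^+ 2 - 2 * th).
      by rewrite /a /b /d natrM -/Rr; ring.
    move: key; rewrite th2 subrr mul0r addr0; lra.
  case: ifP => _.
    by rewrite /a /b; apply: eqle; ring.
  case: ifP => _.
    by rewrite /c /d; apply: eqle; ring.
  by rewrite /a /c /d; apply: eqle; ring.
have Hth : spectral_radius (adj_mx R n (H_edge r)) <= th.
  rewrite /spectral_radius.
  case: (pselect (exists x, eigenvalue (adj_mx R n (H_edge r)) x)) => [[x Hx]|ne].
    apply: ge_sup; first by exists x.
    by move=> y Hy; apply: Hup.
  have -> : [set x : R | eigenvalue (adj_mx R n (H_edge r)) x]%classic = set0.
    apply/seteqP; split=> y Hy //; exfalso; apply: ne; by exists y.
  by rewrite sup0.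
apply: le_lt_trans Hth _.
have n3 : (3 < n)%N by lia.
apply: (@lt_le_trans _ _ (Num.sqrt (3 * (n - 3))%:R)).
  rewrite /th ltr_sqrt ?ltr0n ?ltr_nat; lia.
rewrite /spectral_radius; apply: ub_le_sup.
  exists n%:R => y Hy; exact: adj_bound Hy.
exact: K_eig.
Qed.
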